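(* Let $(L,\wedge,\vee,0,1)$ be a bounded lattice with additive Nakano mosaic $(L,\boxplus,0)$, where $x\boxplus y:=\{z\in L\mid x\vee y=x\vee z=z\vee y\}$. Then $(x\boxplus x)\boxplus(x\boxplus x)=x\boxplus x$ for all $x\in L$.
   Context: For subsets $X,Y\subseteq L$, $X\boxplus Y:=\bigcup_{u\in X,v\in Y}u\boxplus v$. *)

(* Defs.v *)
From mathcomp Require Import all_boot all_order.
From mathcomp Require Import boolp classical_sets.

Set Implicit Arguments.
Unset Strict Implicit.
Unset Printing Implicit Defensive.

Definition nakano {d : Order.disp_t} {L : latticeType d} (x y : L) : set L :=
  [set z | Order.join x y = Order.join x z /\ Order.join x z = Order.join z y].

Definition nakano_set {d : Order.disp_t} {L : latticeType d} (X Y : set L) : set L :=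
  [set z | exists u, X u /\ exists v, Y v /\ nakano u v z].

(* Main.v *)
Require Import Defs.
From mathcomp Require Import all_boot all_order.
From mathcomp Require Import boolp classical_sets.
Import Order.TTheory.
Local Open Scope order_scope.

Lemma nxx (d : Order.disp_t) (L : tbLatticeType d) (x z : L) :
  nakano x x z <-> z <= x.
Proof.
rewrite /nakano /=; split.
- by move=> [H1 _]; rewrite joinxx in H1; apply/join_idPl; rewrite -H1.
- move=> /join_idPl H; rewrite joinxx H; split => //; by rewrite joinC.
Qed.

Theorem mainTheorem14 (d : Order.disp_t) (L : tbLatticeType d) (x : L) :
  nakano_set (nakano x x) (nakano x x) = nakano x x.
Proof.
apply/seteqP; split => z /=.
- move=> [u [/nxx Hu [v [/nxx Hv [H1 H2]]]]]; apply/nxx.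
  have Hz : u `|` z <= x by rewrite -H1 leUx Hu Hv.
  by apply: le_trans Hz; rewrite leUr.
- move=> Hz; exists z; split => //; exists z; split => //.

Qed.
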